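(* Let $R_e\approx1.4877$ be the unique positive root of $\frac{10}{7(R+1)}-\frac{R^2\sqrt{R}}{R^2+R+1}=0$. Then for all $0<x,y,z<R_e$, $$-\tfrac{10}{7}\sqrt{y}\,d_1(y,z)-\sqrt{yz}\,d_2(y,z)-\sqrt{xy}\,d_2(x,y)>0 .$$
   Context: For $x,y\ge0$: $d_1(x,y)=-\frac{x}{1+x}-\frac{xy}{1+y+xy}-\frac{xy^2}{1+y+xy}\frac{1+x}{1+y}$ and $d_2(x,y)=\frac{xy^2}{1+y+xy}\frac{1+x}{1+y}$. *)

(* Defs.v *)
From Stdlib Require Import Reals.
Open Scope R_scope.

Definition d_1 (x y : R) : R :=
  - (x / (1 + x)) - (x * y) / (1 + y + x * y)
  - (x * y ^ 2) / (1 + y + x * y) * ((1 + x) / (1 + y)).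

Definition d_2 (x y : R) : R :=
  (x * y ^ 2) / (1 + y + x * y) * ((1 + x) / (1 + y)).

Definition fRe (r : R) : R :=
  10 / (7 * (r + 1)) - (r ^ 2 * sqrt r) / (r ^ 2 + r + 1).

(* Main.v *)
Require Import Defs.
From Stdlib Require Import Reals Lra Psatz.
Open Scope R_scope.

Lemma G_mono (Re x y : R) : 0 < Re -> 0 < x < Re -> 0 < y < Re ->
  x*y*(1+x)/(1+y+x*y) < Re*Re*(1+Re)/(1+Re+Re*Re).
Proof.
  intros HR [hx hx'] [hy hy'].
  apply Rmult_lt_reg_r with ((1+y+x*y)*(1+Re+Re*Re)).
  { apply Rmult_lt_0_compat; nra. }
  replace (x*y*(1+x)/(1+y+x*y)*((1+y+x*y)*(1+Re+Re*Re))) with (x*y*(1+x)*(1+Re+Re*Re)) by (field; nra).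
  replace (Re*Re*(1+Re)/(1+Re+Re*Re)*((1+y+x*y)*(1+Re+Re*Re))) with (Re*Re*(1+Re)*(1+y+x*y)) by (field; nra).
  assert (A : y*(1+Re+x*Re) < Re*(1+y+x*y)) by nra.
  assert (B : x*(1+x)*(1+Re+Re*Re) - Re*(1+Re)*(1+Re+x*Re) = (x-Re)*((1+Re+Re*Re)*x + (1+Re)*(1+Re))) by ring.
  assert (B' : x*(1+x)*(1+Re+Re*Re) < Re*(1+Re)*(1+Re+x*Re)).
  { assert (0 < (1+Re+Re*Re)*x + (1+Re)*(1+Re)) by nra. nra. }
  assert (C : x*y*(1+x)*(1+Re+Re*Re) = y * (x*(1+x)*(1+Re+Re*Re))) by ring.
  rewrite C.
  apply Rlt_le_trans with (y * (Re*(1+Re)*(1+Re+x*Re))).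
  { apply Rmult_lt_compat_l; lra. }
  replace (y * (Re*(1+Re)*(1+Re+x*Re))) with (Re*(1+Re)*(y*(1+Re+x*Re))) by ring.
  replace (Re*Re*(1+Re)*(1+y+x*y)) with (Re*(1+Re)*(Re*(1+y+x*y))) by ring.
  apply Rmult_le_compat_l; nra.
Qed.

Theorem lemmaA1 (Re : R)
  (HRe_pos : 0 < Re) (HRe_root : fRe Re = 0)
  (HRe_unique : forall r : R, 0 < r -> fRe r = 0 -> r = Re) :
  forall x y z : R, 0 < x < Re -> 0 < y < Re -> 0 < z < Re ->
    - (10 / 7) * sqrt y * d_1 y z - sqrt (y * z) * d_2 y z
    - sqrt (x * y) * d_2 x y > 0.
Proof.
  intros x y z hx hy hz.
  set (sR := sqrt Re).
  assert (hs : 0 < sR) by (apply sqrt_lt_R0; lra).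
  assert (hss : sR*sR = Re) by (apply sqrt_sqrt; lra).
  assert (Hroot : sR*(Re*Re*(1+Re)/(1+Re+Re*Re)) = 10/7).
  { unfold fRe in HRe_root. fold sR in HRe_root.
    assert (E : (Re^2*sR)/(Re^2+Re+1) = 10/(7*(Re+1))) by lra.
    replace (sR*(Re*Re*(1+Re)/(1+Re+Re*Re))) with ((Re^2*sR)/(Re^2+Re+1)*(1+Re)) by (field; nra).
    rewrite E. field. lra. }
  set (a := sqrt x). set (b := sqrt y). set (c := sqrt z).
  assert (ha : 0 <= a) by apply sqrt_pos.
  assert (hb : 0 < b) by (apply sqrt_lt_R0; lra).
  assert (hc : 0 <= c) by apply sqrt_pos.
  assert (haa : a*a = x) by (apply sqrt_sqrt; lra).
  assert (hcc : c*c = z) by (apply sqrt_sqrt; lra).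
  assert (has : a < sR) by (apply sqrt_lt_1; lra).
  assert (hcs : c < sR) by (apply sqrt_lt_1; lra).
  assert (hs7 : sR < 10/7).
  { destruct (Rlt_or_le sR (10/7)) as [h|h]; auto. exfalso.
    assert (HR : 100/49 <= Re) by nra.
    assert (Re*Re*(1+Re) > 1+Re+Re*Re) by nra.
    assert (Re*Re*(1+Re)/(1+Re+Re*Re) > 1).
    { apply Rmult_gt_reg_r with (1+Re+Re*Re); [nra|].
      unfold Rdiv. rewrite Rmult_assoc, Rinv_l; nra. }
    nra. }
  rewrite sqrt_mult by lra. rewrite sqrt_mult by lra. fold a b c.
  set (G := x*y*(1+x)/(1+y+x*y)).
  assert (HG : G < Re*Re*(1+Re)/(1+Re+Re*Re)) by (apply G_mono; lra).
  assert (HG0 : 0 < G) by (unfold G; apply Rdiv_lt_0_compat; nra).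
  assert (HaG : a*G < 10/7).
  { rewrite <- Hroot. apply Rle_lt_trans with (sR*G).
    apply Rmult_le_compat_r; lra. apply Rmult_lt_compat_l; lra. }
  set (P1 := y/(1+y)).
  assert (hP1 : 0 < P1) by (unfold P1; apply Rdiv_lt_0_compat; lra).
  set (P2 := y*z/(1+z+y*z)).
  assert (hP2 : 0 < P2) by (unfold P2; apply Rdiv_lt_0_compat; nra).
  assert (Hd2x : d_2 x y = P1 * G) by (unfold d_2, P1, G; field; nra).
  assert (hD : 0 < d_2 y z).
  { unfold d_2. apply Rmult_lt_0_compat; apply Rdiv_lt_0_compat; try nra. apply Rmult_lt_0_compat; [lra|]. apply pow_lt; lra. }
  assert (Hd1 : d_1 y z = - P1 - P2 - d_2 y z) by (unfold d_1, d_2, P1, P2; ring).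
  rewrite Hd1, Hd2x.
  set (D := d_2 y z) in *. clearbody D G P1 P2 a b c sR.
  assert (h1 : 0 <= (10/7 - c)*D) by (apply Rmult_le_pos; lra).
  assert (h2 : P1*(a*G) < P1*(10/7)) by (apply Rmult_lt_compat_l; lra).
  assert (h3 : 0 < 10/7*P1 + 10/7*P2 + (10/7 - c)*D - a*(P1*G)) by nra.
  replace (- (10 / 7) * b * (- P1 - P2 - D) - b * c * D - a * b * (P1 * G))
    with (b * (10/7*P1 + 10/7*P2 + (10/7 - c)*D - a*(P1*G))) by ring.
  apply Rmult_lt_0_compat; lra.
Qed.
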